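(* Let $c\in\mathbb{C}$ and let $\mathbf{u},\widehat{\mathbf{u}}$ be quasi-definite linear functionals with $\mathbf{u}=(x-c)^2\widehat{\mathbf{u}}$, SMOPs $(P_n)$ and $(Q_n)$, and monic Jacobi matrices $J$ and $\widehat J$. Write $Q_n=P_n+\alpha_{n,n-1}P_{n-1}+\alpha_{n,n-2}P_{n-2}$ ($n\ge1$, with $P_{-1}=0$) and $(x-c)^2P_n=Q_{n+2}+\beta_{n,n+1}Q_{n+1}+\beta_{n,n}Q_n$ ($n\ge0$). Then $W(Q_{n+1},Q_n)(c)\ne0$ for all $n\ge0$, $$\beta_{n,n}=\frac{W(Q_{n+1},Q_{n+2})(c)}{W(Q_n,Q_{n+1})(c)}\neq0,\qquad \beta_{n,n+1}=-\frac{W(Q_n,Q_{n+2})(c)}{W(Q_n,Q_{n+1})(c)},$$ and, with $L$ the semi-infinite lower triangular matrix with $L_{n,n}=1$, $L_{n,n-1}=\alpha_{n,n-1}$, $L_{n,n-2}=\alpha_{n,n-2}$ and all other entries $0$, and $U$ the semi-infinite upper triangular matrix with $U_{n,n}=\beta_{n,n}$, $U_{n,n+1}=\beta_{n,n+1}$, $U_{n,n+2}=1$ and all other entries $0$, $$(J-cI)^2=UL,\qquad (\widehat J-cI)^2=LU.$$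
   Context: Quasi-definite functional: all leading principal submatrices of the Hankel moment matrix are nonsingular; it has a unique sequence of monic orthogonal polynomials (SMOP) $(P_n)$ with $xP_n=P_{n+1}+b_nP_n+a_nP_{n-1}$, $P_{-1}=0$, $P_0=1$, $a_n\ne0$. The monic Jacobi matrix is the semi-infinite tridiagonal matrix with diagonal $(b_0,b_1,\dots)$, superdiagonal entries $1$ and subdiagonal $(a_1,a_2,\dots)$, so that $x\mathbf{P}=J\mathbf{P}$ for $\mathbf{P}=(P_0,P_1,\dots)^\top$. $\langle(x-c)^2\widehat{\mathbf{u}},p\rangle=\langle\widehat{\mathbf{u}},(x-c)^2p\rangle$. Wronskian: $W(p,q)(x)=p(x)q'(x)-p'(x)q(x)$. *)

(* Defs.v *)
From HB Require Import structures.
From mathcomp Require Import all_boot all_order all_algebra.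
From mathcomp Require Import reals complex.
Set Implicit Arguments. Unset Strict Implicit. Unset Printing Implicit Defensive.
Import GRing.Theory Num.Theory.
Local Open Scope ring_scope.

Definition lin_functional (K : fieldType) (u : {poly K} -> K) : Prop :=
  forall (a : K) (p q : {poly K}), u (a *: p + q) = a * u p + u q.

Definition quasi_definite (K : fieldType) (u : {poly K} -> K) : Prop :=
  forall n : nat, \det (\matrix_(i < n.+1, j < n.+1) u 'X^(i + j)) != 0.

Definition is_SMOP (K : fieldType) (u : {poly K} -> K) (P : nat -> {poly K}) : Prop :=
  (forall n, P n \is monic) /\ (forall n, size (P n) = n.+1) /\
  (forall m n, m != n -> u (P m * P n) = 0) /\ (forall n, u (P n * P n) != 0).

Definition smat (K : Type) := nat -> nat -> K.

Definition monic_jacobi (K : fieldType) (P : nat -> {poly K}) (J : smat K) : Prop :=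
  exists (a b : nat -> K),
    (forall n, 'X * P n = P n.+1 + b n *: P n
                          + (if n is m.+1 then a n *: P m else 0)) /\
    (forall i j, J i j = if j == i.+1 then 1
                         else if j == i then b i
                         else if i == j.+1 then a i else 0).

Definition smat_subc (K : fieldType) (A : smat K) (c : K) : smat K :=
  fun i j => A i j - (if i == j then c else 0).

(* M is the product A B of semi-infinite matrices: for every entry, the
   partial sums of sum_k A_{ik} B_{kj} are eventually constant equal to M_{ij}
   (i.e. the sum has finitely many nonzero terms and equals M_{ij}). *)
Definition smat_prod (K : fieldType) (A B M : smat K) : Prop :=
  forall i j, exists N : nat, forall N' : nat, (N <= N')%N ->
    \sum_(k < N') A i k * B k j = M i j.

Definition wronskian (K : fieldType) (p q : {poly K}) : {poly K} :=
  p * q^`() - p^`() * q.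

Definition Lmat (K : fieldType) (al1 al2 : nat -> K) : smat K :=
  fun i j => if i == j then 1
             else if i == j.+1 then al1 i
             else if i == j.+2 then al2 i else 0.

Definition Umat (K : fieldType) (be0 be1 : nat -> K) : smat K :=
  fun i j => if j == i then be0 i
             else if j == i.+1 then be1 i
             else if j == i.+2 then 1 else 0.

(* Main.v *)
Require Import Defs.
From HB Require Import structures.
From mathcomp Require Import all_boot all_order all_algebra.
From mathcomp Require Import reals complex.
From mathcomp Require Import zify ring.
Set Implicit Arguments. Unset Strict Implicit. Unset Printing Implicit Defensive.
Import GRing.Theory Num.Theory.
Local Open Scope ring_scope.

Section Gen.
Variable K : fieldType.
Implicit Types (p q r s : {poly K}) (V W : nat -> {poly K}) (f : nat -> K).

Lemma sum_trunc (M : zmodType) (F : nat -> M) m N : (m <= N)%N ->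
  (forall k, (m <= k)%N -> F k = 0) -> \sum_(k < N) F k = \sum_(k < m) F k.
Proof.
move=> mN F0; rewrite -(subnKC mN) big_split_ord /= [X in _ + X]big1 ?addr0 // => k _.
by apply: F0; rewrite leq_addr.
Qed.

Lemma size_sum_le V f N : (forall k, size (V k) = k.+1) ->
  (size (\sum_(k < N) f k *: V k)%R <= N)%N.
Proof.
move=> hV; elim: N => [|N IH]; first by rewrite big_ord0 size_poly0.
rewrite big_ord_recr /=; apply: leq_trans (size_polyD _ _) _.
rewrite geq_max (leq_trans IH) //= (leq_trans (size_scale_leq _ _)) // hV //.
Qed.

Lemma coef_uniq V f N : (forall k, size (V k) = k.+1) ->
  \sum_(k < N) f k *: V k = 0 -> forall k, (k < N)%N -> f k = 0.
Proof.
move=> hV; elim: N => [|N IH]; first by [].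
rewrite big_ord_recr /= => hs.
have fN : f N = 0.
  apply/eqP; apply/negP => /negP hf.
  have := congr1 (fun p : {poly K} => size p) hs; rewrite /=; rewrite size_poly0 addrC size_polyDl.
    by rewrite size_scale // hV.
  by rewrite size_scale // hV ltnS size_sum_le.
move: hs; rewrite fN scale0r addr0 => hs k; rewrite ltnS leq_eqVlt.
by case/orP => [/eqP -> //|]; apply: IH.
Qed.

Lemma basis_step V p m : (forall k, V k \is monic) -> (forall k, size (V k) = k.+1) ->
  (size p <= m.+1)%N -> (size (p - p`_m *: V m)%R <= m)%N.
Proof.
move=> hm hV hp; apply/leq_sizeP => j hj.
rewrite coefB coefZ; move: hj; rewrite leq_eqVlt => /orP [/eqP <-|hj].
  have : lead_coef (V m) = 1 by apply/monicP.
  rewrite lead_coefE hV /= => ->; by rewrite mulr1 subrr.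
rewrite (leq_sizeP _ _ hp j hj).
rewrite (leq_sizeP _ _ (eq_leq (hV m)) j hj).
by rewrite mulr0 subrr.
Qed.

Lemma basis V : (forall k, V k \is monic) -> (forall k, size (V k) = k.+1) ->
  forall m p, (size p <= m)%N -> exists f, p = \sum_(k < m) f k *: V k.
Proof.
move=> hm hV; elim => [|m IH] p hp.
  by exists (fun _ => 0); rewrite big_ord0; apply/eqP; rewrite -size_poly_eq0 -leqn0.
have [f hf] := IH _ (basis_step hm hV hp).
exists (fun k => if (k < m)%N then f k else p`_m).
rewrite big_ord_recr /= ltnn.
rewrite (eq_bigr (fun k : 'I_m => f k *: V k)) => [|k _]; last by rewrite ltn_ord.
by rewrite -hf subrK.
Qed.


Lemma lin0 (u : {poly K} -> K) : lin_functional u -> u 0 = 0.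
Proof.
move=> hu; have := hu 1 0 0; rewrite scaler0 addr0 mul1r => h.
by move/eqP: h; rewrite eq_sym -subr_eq0 addrK => /eqP.
Qed.

Lemma linD (u : {poly K} -> K) p q : lin_functional u -> u (p + q) = u p + u q.
Proof. by move=> hu; have := hu 1 p q; rewrite scale1r mul1r. Qed.

Lemma linZ (u : {poly K} -> K) a p : lin_functional u -> u (a *: p) = a * u p.
Proof. by move=> hu; have := hu a p 0; rewrite !addr0 lin0 // addr0. Qed.

Lemma linsum (u : {poly K} -> K) (I : Type) (r : seq I) (F : I -> {poly K}) :
  lin_functional u -> u (\sum_(i <- r) F i) = \sum_(i <- r) u (F i).
Proof.
move=> hu; exact: (big_morph u (fun p q => linD p q hu) (lin0 hu)).
Qed.

Lemma orth (u : {poly K} -> K) V : lin_functional u ->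
  (forall k, V k \is monic) -> (forall k, size (V k) = k.+1) ->
  (forall m n, m != n -> u (V m * V n) = 0) ->
  forall m s, (size s <= m)%N -> u (V m * s) = 0.
Proof.
move=> hu hm hV ho m s hs.
have [f ->] := basis hm hV hs.
rewrite mulr_sumr linsum // big1 // => k _.
rewrite -scalerAr linZ // ho ?mulr0 //.
by rewrite neq_ltn ltn_ord orbT.
Qed.

Lemma dbl_root p c : p.[c] = 0 -> p^`().[c] = 0 -> exists r, p = r * ('X - c%:P)^+2.
Proof.
move=> h0 h1.
have /factor_theorem [q hq] : root p c by rewrite rootE h0.
subst p; move: h1; rewrite derivM derivXsubC mulr1 hornerD hornerM hornerXsubC subrr mulr0 add0r.
move=> hq0.
have /factor_theorem [r hr] : root q c by rewrite rootE hq0.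
subst q; by exists r; rewrite -mulrA -expr2.
Qed.

Lemma pair_sol (x y x' y' : K) : x * y' - x' * y = 0 ->
  exists al be, (al != 0 \/ be != 0) /\ al * x + be * y = 0 /\ al * x' + be * y' = 0.
Proof.
move=> hw.
have [yx0|] := boolP ((y != 0) || (x != 0)).
  exists y, (-x); split; first by case/orP: yx0 => h; [left|right; rewrite oppr_eq0].
  split; first by ring.
  by rewrite -[RHS]oppr0 -hw; ring.
rewrite negb_or !negbK => /andP [/eqP y0 /eqP x0].
have [h|] := boolP ((y' != 0) || (x' != 0)).
  exists y', (-x'); split; first by case/orP: h => h; [left|right; rewrite oppr_eq0].
  by rewrite x0 y0; split; ring.
rewrite negb_or !negbK => /andP [/eqP y'0 /eqP x'0].
exists 1, 0; split; first by left; exact: oner_neq0.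
by rewrite x0 x'0; split; ring.
Qed.


Lemma wr_neq0 (u uh : {poly K} -> K) P Q c : lin_functional u -> lin_functional uh ->
  (forall p, u p = uh (('X - c%:P) ^+ 2 * p)) -> is_SMOP u P -> is_SMOP uh Q ->
  forall n, (wronskian (Q n.+1) (Q n)).[c] != 0.
Proof.
move=> hu huh hlink [Pm [Ps [Po Pn]]] [Qm [Qs [Qo Qn]]] n.
apply/negP => /eqP hw.
have hw' : (Q n.+1).[c] * (Q n)^`().[c] - (Q n.+1)^`().[c] * (Q n).[c] = 0.
  by rewrite -hw /wronskian !hornerE.
have [al [be [hab [h0 h1]]]] := pair_sol hw'.
pose p := al *: Q n.+1 + be *: Q n.
have [r hr] : exists r, p = r * ('X - c%:P)^+2.
  apply: dbl_root; first by rewrite /p !hornerE.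
  by rewrite /p !derivE !hornerE.
have hrs : forall s, (size s <= n)%N -> u (r * s) = 0.
  move=> s hs; rewrite hlink mulrA (mulrC _ r) -hr /p mulrDl linD //.
  rewrite -!scalerAl !linZ // !(orth huh Qm Qs Qo) ?mulr0 ?addr0 //.
  exact: leq_trans hs (leqnSn n).
have r0 : r = 0.
  apply/eqP/negP => /negP rn0.
  have szp : (size p <= n.+2)%N.
    apply: leq_trans (size_polyD _ _) _.
    by rewrite geq_max !(leq_trans (size_scale_leq _ _)) // Qs.
  have szr : (size r <= n)%N.
    move: szp; rewrite hr size_Mmonic //; last by apply: monic_exp; exact: monicXsubC.
    by rewrite size_exp_XsubC; lia.
  have sr : size r = (size r).-1.+1 by rewrite prednK // size_poly_gt0.
  set d := (size r).-1 in sr.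
  have hrem : (size (r - r`_d *: P d)%R <= d)%N.
    by apply: basis_step => //; rewrite sr.
  have e1 : u (r * P d) = 0 by apply: hrs; rewrite Ps -sr.
  have e2 : u (r * P d) = r`_d * u (P d * P d).
    rewrite -{1}(subrK (r`_d *: P d) r) mulrDl linD // mulrC (orth hu Pm Ps Po hrem).
    by rewrite add0r -scalerAl linZ.
  move: e1; rewrite e2 => /eqP; rewrite mulf_eq0 (negbTE (Pn d)) orbF.
  have : lead_coef r != 0 by rewrite lead_coef_eq0.
  by rewrite lead_coefE => /negbTE ->.
have p0 : p = 0 by rewrite hr r0 mul0r.
have al0 : al = 0.
  apply/eqP/negP => /negP hal.
  have := congr1 (fun q : {poly K} => size q) p0; rewrite /= size_poly0 /p size_polyDl.
    by rewrite size_scale // => h; have := Qs n.+1; rewrite h.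
  rewrite [X in (_ < X)%N]size_scale //; apply: (leq_ltn_trans (size_scale_leq _ _)).
  apply: (@leq_trans n.+2); first by rewrite (Qs n).
  by rewrite -(Qs n.+1); exact: leqnn.
have be0 : be = 0.
  move: p0; rewrite /p al0 scale0r add0r => /eqP; rewrite scaler_eq0.
  by rewrite -size_poly_eq0 Qs orbF => /eqP.
by case: hab; rewrite ?al0 ?be0 eqxx.
Qed.


Lemma wrE p q c : (wronskian p q).[c] = p.[c] * q^`().[c] - p^`().[c] * q.[c].
Proof. by rewrite /wronskian !hornerE. Qed.

Lemma beta_form P Q c (be0 be1 : K) n :
  ('X - c%:P)^+2 * P n = Q n.+2 + be1 *: Q n.+1 + be0 *: Q n ->
  (wronskian (Q n.+1) (Q n)).[c] != 0 ->
  be0 = (wronskian (Q n.+1) (Q n.+2)).[c] / (wronskian (Q n) (Q n.+1)).[c] /\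
  be1 = - ((wronskian (Q n) (Q n.+2)).[c] / (wronskian (Q n) (Q n.+1)).[c]).
Proof.
move=> hP hw; rewrite !wrE; move: hw; rewrite wrE => hw.
have e0 : (Q n.+2).[c] + be1 * (Q n.+1).[c] + be0 * (Q n).[c] = 0.
  have := congr1 (fun q => q.[c]) hP; rewrite /= expr2 !hornerE subrr !mul0r => <-.
  done.
have e1 : (Q n.+2)^`().[c] + be1 * (Q n.+1)^`().[c] + be0 * (Q n)^`().[c] = 0.
  have := congr1 (fun q => (q^`()).[c]) hP.
  rewrite /= expr2 -mulrA derivM derivXsubC mul1r !derivE !hornerE subrr !mul0r addr0 => <-.
  done.
set q0 := (Q n).[c] in e0 hw *; set q1 := (Q n.+1).[c] in e0 hw *; set q2 := (Q n.+2).[c] in e0 *.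
set d0 := (Q n)^`().[c] in e1 hw *; set d1 := (Q n.+1)^`().[c] in e1 hw *;
set d2 := (Q n.+2)^`().[c] in e1 *.
have q2E : q2 = (q2 + be1 * q1 + be0 * q0) - be1 * q1 - be0 * q0 by ring.
have d2E : d2 = (d2 + be1 * d1 + be0 * d0) - be1 * d1 - be0 * d0 by ring.
rewrite e0 in q2E; rewrite e1 in d2E.
have hD : q0 * d1 - d0 * q1 != 0.
  by move: hw; apply: contra => /eqP h; rewrite -oppr_eq0 -h; apply/eqP; ring.
split.
  have -> : q1 * d2 - d1 * q2 = be0 * (q0 * d1 - d0 * q1) by rewrite q2E d2E; ring.
  by rewrite mulfK.
have -> : q0 * d2 - d0 * q2 = - (be1 * (q0 * d1 - d0 * q1)) by rewrite q2E d2E; ring.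
by rewrite mulNr mulfK // opprK.
Qed.

End Gen.

Ltac simp_eq := repeat (match goal with |- context [(?x == ?y :> nat)] =>
  first [ rewrite (_ : (x == y) = true); last by lia
        | rewrite (_ : (x == y) = false); last by lia ] end); rewrite /=.

Section Mat.
Variable K : fieldType.
Implicit Types (V W : nat -> {poly K}) (A B : smat K).

Lemma expand A B W V (T : {poly K}) i :
 (forall N, (i.+3 <= N)%N -> \sum_(k < N) A i k *: W k = T) ->
 (forall k N, (k.+3 <= N)%N -> W k = \sum_(j < N) B k j *: V j) ->
 forall N N', (i.+3 <= N)%N -> (N.+2 <= N')%N ->
 T = \sum_(j < N') (\sum_(k < N) A i k * B k j) *: V j.
Proof.
move=> h1 h2 N N' hN hN'.
rewrite -(h1 N hN).
rewrite (eq_bigr (fun k : 'I_N => A i k *: \sum_(j < N') B k j *: V j)); last first.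
  move=> k _; congr (_ *: _); apply: h2; apply: leq_trans hN'.
  by rewrite !ltnS ltn_ord.
under eq_bigr => k _ do rewrite scaler_sumr.
rewrite exchange_big /=; apply: eq_bigr => j _.
by rewrite scaler_suml; apply: eq_bigr => k _; rewrite scalerA.
Qed.

Lemma coef_eq V (c1 c2 : nat -> K) N : (forall k, size (V k) = k.+1) ->
  \sum_(j < N) c1 j *: V j = \sum_(j < N) c2 j *: V j -> forall j, (j < N)%N -> c1 j = c2 j.
Proof.
move=> hV h j hj; apply/eqP; rewrite -subr_eq0; apply/eqP.
apply: (@coef_uniq K V (fun j => c1 j - c2 j) N hV _ j hj).
under eq_bigr => k _ do rewrite scalerBl.
by rewrite sumrB h subrr.
Qed.

Lemma combine (A1 B1 A2 B2 : smat K) V W1 W2 (T : nat -> {poly K}) :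
 (forall k, size (V k) = k.+1) ->
 (forall i k, (i.+3 <= k)%N -> A1 i k = 0) ->
 (forall i k, (i.+3 <= k)%N -> A2 i k = 0) ->
 (forall i N, (i.+3 <= N)%N -> \sum_(k < N) A1 i k *: W1 k = T i) ->
 (forall k N, (k.+3 <= N)%N -> W1 k = \sum_(j < N) B1 k j *: V j) ->
 (forall i N, (i.+3 <= N)%N -> \sum_(k < N) A2 i k *: W2 k = T i) ->
 (forall k N, (k.+3 <= N)%N -> W2 k = \sum_(j < N) B2 k j *: V j) ->
 exists M, smat_prod A1 B1 M /\ smat_prod A2 B2 M.
Proof.
move=> hV b1 b2 e11 e12 e21 e22.
exists (fun i j => \sum_(k < i.+3) A2 i k * B2 k j); split => i j; exists i.+3 => N hN.
  rewrite (@sum_trunc _ (fun k => A1 i k * B1 k j) i.+3 N hN); last first.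
    by move=> k hk; rewrite b1 // mul0r.
  have hN' : ((i.+3).+2 <= i + j + 5)%N by lia.
  have E1 := expand (e11 i) e12 (leqnn i.+3) hN'.
  have E2 := expand (e21 i) e22 (leqnn i.+3) hN'.
  apply: (@coef_eq V (fun j => \sum_(k < i.+3) A1 i k * B1 k j)
    (fun j => \sum_(k < i.+3) A2 i k * B2 k j) _ hV (etrans (esym E1) E2)).
  lia.
rewrite (@sum_trunc _ (fun k => A2 i k * B2 k j) i.+3 N hN) //.
by move=> k hk; rewrite b2 // mul0r.
Qed.


Lemma jac_row P (J : smat K) c : monic_jacobi P J ->
 (forall i k, (i.+2 <= k)%N -> smat_subc J c i k = 0) /\
 (forall i N, (i.+2 <= N)%N -> \sum_(k < N) smat_subc J c i k *: P k = ('X - c%:P) * P i).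
Proof.
move=> [a [b [hrec hJ]]].
have band : forall i k, (i.+2 <= k)%N -> smat_subc J c i k = 0.
  by move=> i k hk; rewrite /smat_subc hJ; simp_eq; exact: subr0.
split => // i N hN.
rewrite (@sum_trunc _ (fun k => smat_subc J c i k *: P k) i.+2 N hN); last first.
  by move=> k hk; rewrite band // scale0r.
rewrite mulrBl hrec.
case: i hN => [|m] hN.
  rewrite !big_ord_recr big_ord0 /= /smat_subc !hJ; simp_eq.
  rewrite -!mul_polyC !polyCB; ring.
rewrite !big_ord_recr /= big1; last first.
  by move=> k _; have hk := ltn_ord k; rewrite /smat_subc hJ; simp_eq; rewrite subr0 scale0r.
rewrite /smat_subc !hJ; simp_eq.
rewrite -!mul_polyC !polyCB; ring.
Qed.


Lemma mon1 (p : {poly K}) : p \is monic -> size p = 1%N -> p = 1.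
Proof.
move=> hm hs; rewrite (size1_polyC (eq_leq hs)).
by have := monicP hm; rewrite lead_coefE hs /= => ->.
Qed.

Lemma Lrow P Q (al1 al2 : nat -> K) :
 (forall n, P n \is monic) -> (forall n, size (P n) = n.+1) ->
 (forall n, Q n \is monic) -> (forall n, size (Q n) = n.+1) ->
 (forall n, Q n.+1 = P n.+1 + al1 n.+1 *: P n
                      + (if n is m.+1 then al2 n.+1 *: P m else 0)) ->
 (forall i k, (i.+1 <= k)%N -> Lmat al1 al2 i k = 0) /\
 (forall i N, (i.+1 <= N)%N -> \sum_(k < N) Lmat al1 al2 i k *: P k = Q i).
Proof.
move=> Pm Ps Qm Qs hQ.
have band : forall i k, (i.+1 <= k)%N -> Lmat al1 al2 i k = 0.
  by move=> i k hk; rewrite /Lmat; simp_eq.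
split => // i N hN.
rewrite (@sum_trunc _ (fun k => Lmat al1 al2 i k *: P k) i.+1 N hN); last first.
  by move=> k hk; rewrite band // scale0r.
case: i hN => [|[|m]] hN.
- rewrite big_ord_recr big_ord0 /= /Lmat /= scale1r add0r.
  by rewrite (mon1 (Pm 0%N) (Ps 0%N)) (mon1 (Qm 0%N) (Qs 0%N)).
- rewrite !big_ord_recr big_ord0 /= /Lmat /= hQ addr0 scale1r add0r addrC.
  done.
rewrite !big_ord_recr /= big1; last first.
  by move=> k _; have hk := ltn_ord k; rewrite /Lmat; simp_eq; rewrite scale0r.
rewrite /Lmat; simp_eq; rewrite hQ.
rewrite -!mul_polyC polyC1; ring.
Qed.

Lemma Urow P Q c (be0 be1 : nat -> K) :
 (forall n, ('X - c%:P) ^+ 2 * P n = Q n.+2 + be1 n *: Q n.+1 + be0 n *: Q n) ->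
 (forall i k, (i.+3 <= k)%N -> Umat be0 be1 i k = 0) /\
 (forall i N, (i.+3 <= N)%N -> \sum_(k < N) Umat be0 be1 i k *: Q k = ('X - c%:P) ^+ 2 * P i).
Proof.
move=> hP.
have band : forall i k, (i.+3 <= k)%N -> Umat be0 be1 i k = 0.
  by move=> i k hk; rewrite /Umat; simp_eq.
split => // i N hN.
rewrite (@sum_trunc _ (fun k => Umat be0 be1 i k *: Q k) i.+3 N hN); last first.
  by move=> k hk; rewrite band // scale0r.
rewrite !big_ord_recr /= big1; last first.
  by move=> k _; have hk := ltn_ord k; rewrite /Umat; simp_eq; rewrite scale0r.
rewrite /Umat; simp_eq; rewrite hP.
rewrite -!mul_polyC polyC1; ring.
Qed.

End Mat.

Theorem mainTheorem5 (R : realType) (c : R[i])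
  (u uh : {poly R[i]} -> R[i]) (P Q : nat -> {poly R[i]})
  (J Jh : smat R[i]) (al1 al2 be0 be1 : nat -> R[i]) :
  lin_functional u -> lin_functional uh ->
  quasi_definite u -> quasi_definite uh ->
  (forall p, u p = uh (('X - c%:P) ^+ 2 * p)) ->
  is_SMOP u P -> is_SMOP uh Q ->
  monic_jacobi P J -> monic_jacobi Q Jh ->
  (forall n, Q n.+1 = P n.+1 + al1 n.+1 *: P n
                      + (if n is m.+1 then al2 n.+1 *: P m else 0)) ->
  (forall n, ('X - c%:P) ^+ 2 * P n = Q n.+2 + be1 n *: Q n.+1 + be0 n *: Q n) ->
  (forall n, (wronskian (Q n.+1) (Q n)).[c] != 0) /\
  (forall n, be0 n = (wronskian (Q n.+1) (Q n.+2)).[c] / (wronskian (Q n) (Q n.+1)).[c]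
             /\ be0 n != 0) /\
  (forall n, be1 n = - ((wronskian (Q n) (Q n.+2)).[c] / (wronskian (Q n) (Q n.+1)).[c])) /\
  (exists M, smat_prod (smat_subc J c) (smat_subc J c) M
             /\ smat_prod (Umat be0 be1) (Lmat al1 al2) M) /\
  (exists M, smat_prod (smat_subc Jh c) (smat_subc Jh c) M
             /\ smat_prod (Lmat al1 al2) (Umat be0 be1) M).
Proof.
move=> hu huh _ _ hlink sP sQ jP jQ hQ hP.
have hw := wr_neq0 hu huh hlink sP sQ.
have [Pm [Ps _]] := sP; have [Qm [Qs _]] := sQ.
have [Ub Ur] := Urow hP.
have [Lb Lr] := Lrow Pm Ps Qm Qs hQ.
have [Jb Jr] := jac_row c jP.
have [Jhb Jhr] := jac_row c jQ.
have wsym : forall p q, (wronskian p q).[c] != 0 -> (wronskian q p).[c] != 0.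
  move=> p q; rewrite !wrE; apply: contra => /eqP h.
  by rewrite -oppr_eq0; apply/eqP; rewrite -h; ring.
split; first exact: hw.
split.
  move=> n; have [-> _] := beta_form (hP n) (hw n); split => //.
  rewrite mulf_eq0 invr_eq0 negb_or; apply/andP; split; apply: wsym; exact: hw.
split.
  by move=> n; have [_ ->] := beta_form (hP n) (hw n).
split.
  apply: (@combine _ (smat_subc J c) (smat_subc J c) (Umat be0 be1) (Lmat al1 al2) P
    (fun k => ('X - c%:P) * P k) Q (fun i => ('X - c%:P) ^+ 2 * P i) Ps).
  - by move=> i k hk; apply: Jb; apply: ltnW.
  - exact: Ub.
  - move=> i N hN /=; under eq_bigr => k _ do rewrite scalerAr.
    by rewrite -mulr_sumr Jr ?expr2 ?mulrA //; apply: ltnW.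
  - by move=> k N hk /=; rewrite Jr //; apply: ltnW.
  - exact: Ur.
  - by move=> k N hk; rewrite Lr //; lia.
apply: (@combine _ (smat_subc Jh c) (smat_subc Jh c) (Lmat al1 al2) (Umat be0 be1) Q
    (fun k => ('X - c%:P) * Q k) (fun k => ('X - c%:P) ^+ 2 * P k)
    (fun i => ('X - c%:P) ^+ 2 * Q i) Qs).
- by move=> i k hk; apply: Jhb; apply: ltnW.
- by move=> i k hk; apply: Lb; lia.
- move=> i N hN /=; under eq_bigr => k _ do rewrite scalerAr.
  by rewrite -mulr_sumr Jhr ?expr2 ?mulrA //; apply: ltnW.
- by move=> k N hk /=; rewrite Jhr //; apply: ltnW.
- move=> i N hN /=; under eq_bigr => k _ do rewrite scalerAr.
  by rewrite -mulr_sumr Lr //; lia.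
- by move=> k N hk /=; rewrite Ur.
Qed.
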